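(* If $d: t \to_w^* u$ is a reduction sequence, then $t \to_{w\neg gcv}^{k} \to_{wgcv}^{h} u$ where $k$ is the number of $\to_{w\neg gcv}$ steps in $d$ and $h$ is greater than or equal to the number of $\to_{wgcv}$ steps in $d$.
   Context: Terms: $t,u,s ::= x \mid \lambda x.t \mid t\,u \mid t[x\backslash u]$, where $t[x\backslash u]$ is an explicit substitution binding $x$ in $t$; terms up to $\alpha$-renaming. Values: $v ::= \lambda x.t$. Substitution contexts: $S ::= \langle\cdot\rangle \mid S[x\backslash u]$. Weak contexts: $W ::= \langle\cdot\rangle \mid W\,t \mid t\,W \mid t[x\backslash W] \mid W[x\backslash u]$. $W\langle\langle t\rangle\rangle$ denotes plugging where $W$ does not capture free variables of $t$. Root rules: $S\langle \lambda x.t\rangle u \mapsto_m S\langle t[x\backslash u]\rangle$; $W\langle\langle x\rangle\rangle[x\backslash u] \mapsto_{e} W\langle\langle u\rangle\rangle[x\backslash u]$ ($W$ weak context); $t[x\backslash S\langle v\rangle] \mapsto_{gcv} S\langle t\rangle$ if $x\notin\mathrm{fv}(t)$. $\to_{wm},\to_{we},\to_{wgcv}$ are their closures under weak contexts, $\to_w$ their union, $\to_{w\neg gcv}:=\to_{wm}\cup\to_{we}$. *)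

(* Defs.v *)
(* Terms of the weak linear substitution calculus with
   explicit substitutions, represented with de Bruijn indices (so terms are
   identified up to alpha-renaming). *)
From Stdlib Require Import List Arith.
Import ListNotations.

Inductive term : Type :=
| Var : nat -> term
| Lam : term -> term
| App : term -> term -> term
| ES  : term -> term -> term.     (* ES t u = t[x\u] : binds index 0 in t *)

Fixpoint lift (k c : nat) (t : term) : term :=
  match t with
  | Var n => if c <=? n then Var (n + k) else Var n
  | Lam t => Lam (lift k (S c) t)
  | App t u => App (lift k c t) (lift k c u)
  | ES t u => ES (lift k (S c) t) (lift k c u)
  end.

(* Substitution contexts S ::= <.> | S[x\u], as a list whose head is the
   outermost substitution. *)
Definition sctx := list term.

Fixpoint plugS (S : sctx) (t : term) : term :=
  match S with
  | [] => t
  | s :: S' => ES (plugS S' t) s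
  end.

Inductive wctx : Type :=
| WHole : wctx
| WAppL : wctx -> term -> wctx
| WAppR : term -> wctx -> wctx
| WESR  : term -> wctx -> wctx     (* t[x\W] *)
| WESL  : wctx -> term -> wctx.    (* W[x\u] *)

(* plain plugging (may capture): used for closure under weak contexts *)
Fixpoint plugW (W : wctx) (t : term) : term :=
  match W with
  | WHole => t
  | WAppL W u => App (plugW W t) u
  | WAppR s W => App s (plugW W t)
  | WESR s W => ES s (plugW W t)
  | WESL W u => ES (plugW W t) u
  end.

Fixpoint wdepth (W : wctx) : nat :=
  match W with
  | WHole => 0
  | WAppL W _ => wdepth W
  | WAppR _ W => wdepth W
  | WESR _ W => wdepth W
  | WESL W _ => S (wdepth W)
  end.

(* S<\x.t> u |->m S<t[x\u]>  (u is not captured by S) *)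
Inductive root_m : term -> term -> Prop :=
| RootM : forall (S : sctx) t u,
    root_m (App (plugS S (Lam t)) u) (plugS S (ES t (lift (length S) 0 u))).

(* W<<x>>[x\u] |->e W<<u>>[x\u] : the variable bound by the outer
   substitution occurs at the hole of W (index wdepth W there), and u is
   plugged without capture (lifted by the binders above it). *)
Inductive root_e : term -> term -> Prop :=
| RootE : forall (W : wctx) u,
    root_e (ES (plugW W (Var (wdepth W))) u)
           (ES (plugW W (lift (S (wdepth W)) 0 u)) u).

(* t[x\S<v>] |->gcv S<t> if x notin fv(t) : t is (lift 1 0 t0), and t0 is
   placed under S without capture. *)
Inductive root_gcv : term -> term -> Prop :=
| RootGcv : forall (S : sctx) t0 v,
    root_gcv (ES (lift 1 0 t0) (plugS S (Lam v))) (plugS S (lift (length S) 0 t0)).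

Inductive wclos (R : term -> term -> Prop) : term -> term -> Prop :=
| WClos : forall W t u, R t u -> wclos R (plugW W t) (plugW W u).

Definition wm := wclos root_m.
Definition we := wclos root_e.
Definition wgcv := wclos root_gcv.
Definition wneg (t u : term) : Prop := wm t u \/ we t u.
Definition wstep (t u : term) : Prop := wneg t u \/ wgcv t u.

Inductive nsteps (R : term -> term -> Prop) : nat -> term -> term -> Prop :=
| nsteps0 : forall t, nsteps R 0 t t
| nstepsS : forall n t t' u, R t t' -> nsteps R n t' u -> nsteps R (S n) t u.

(* A reduction sequence d : t ->w* u, each step labelled as a w-not-gcv step
   or a wgcv step;  wseq t u k h  means there is such a sequence with k
   w-not-gcv steps and h wgcv steps. *)
Inductive wseq : term -> term -> nat -> nat -> Prop :=
| wseq_refl : forall t, wseq t t 0 0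
| wseq_neg : forall t t' u k h, wneg t t' -> wseq t' u k h -> wseq t u (S k) h
| wseq_gcv : forall t t' u k h, wgcv t t' -> wseq t' u k h -> wseq t u k (S h).

(* Main.v *)
Require Import Defs.
From Stdlib Require Import List Arith Lia.
Import ListNotations.

Ltac varcase :=
  simpl; repeat (match goal with |- context [?a <=? ?b] => destruct (Nat.leb_spec a b) end; simpl);
  try (f_equal; lia); try lia.

Lemma lift_0 : forall t c, lift 0 c t = t.
Proof. induction t; intros c; simpl; try (f_equal; auto; fail).
  destruct (c <=? n); f_equal; lia. Qed.

Lemma lift_lift_add : forall t j k c d, c <= d <= c + j -> lift k d (lift j c t) = lift (j+k) c t.
Proof. induction t; intros j k c d Hd.
  - varcase.
  - simpl. f_equal. apply IHt. lia.
  - simpl. f_equal; auto.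
  - simpl. f_equal. apply IHt1; lia. apply IHt2; lia.
Qed.

Lemma lift_lift_comm : forall t j k c d, c <= d -> lift k c (lift j d t) = lift j (d+k) (lift k c t).
Proof. induction t; intros j k c d Hd.
  - varcase.
  - simpl. f_equal. replace (S (d+k)) with (S d + k) by lia. apply IHt. lia.
  - simpl. f_equal; auto.
  - simpl. f_equal. replace (S (d+k)) with (S d + k) by lia. apply IHt1; lia. apply IHt2; lia.
Qed.

Fixpoint liftS (k c : nat) (S : sctx) : sctx :=
  match S with [] => [] | s :: S' => lift k c s :: liftS k (Datatypes.S c) S' end.

Fixpoint liftW (k c : nat) (W : wctx) : wctx :=
  match W with
  | WHole => WHole
  | WAppL W u => WAppL (liftW k c W) (lift k c u)
  | WAppR s W => WAppR (lift k c s) (liftW k c W)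
  | WESR s W => WESR (lift k (S c) s) (liftW k c W)
  | WESL W u => WESL (liftW k (S c) W) (lift k c u)
  end.

Fixpoint wcomp (W V : wctx) : wctx :=
  match W with
  | WHole => V
  | WAppL W u => WAppL (wcomp W V) u
  | WAppR s W => WAppR s (wcomp W V)
  | WESR s W => WESR s (wcomp W V)
  | WESL W u => WESL (wcomp W V) u
  end.

Fixpoint wS (S : sctx) : wctx :=
  match S with [] => WHole | s :: S' => WESL (wS S') s end.

Lemma length_liftS : forall S k c, length (liftS k c S) = length S.
Proof. induction S; simpl; auto. Qed.

Lemma wdepth_liftW : forall W k c, wdepth (liftW k c W) = wdepth W.
Proof. induction W; intros; simpl; auto. Qed.

Lemma plugW_wcomp : forall W V t, plugW (wcomp W V) t = plugW W (plugW V t).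
Proof. induction W; intros; simpl; f_equal; auto. Qed.

Lemma wdepth_wcomp : forall W V, wdepth (wcomp W V) = wdepth W + wdepth V.
Proof. induction W; intros; simpl; auto. Qed.

Lemma plugW_wS : forall S t, plugW (wS S) t = plugS S t.
Proof. induction S; intros; simpl; f_equal; auto. Qed.

Lemma wdepth_wS : forall S, wdepth (wS S) = length S.
Proof. induction S; simpl; auto. Qed.

Lemma plugS_app : forall S1 S2 t, plugS (S1 ++ S2) t = plugS S1 (plugS S2 t).
Proof. induction S1; intros; simpl; f_equal; auto. Qed.

Lemma lift_plugS : forall S k c t, lift k c (plugS S t) = plugS (liftS k c S) (lift k (c + length S) t).
Proof. induction S; intros; simpl. rewrite Nat.add_0_r; auto.
  f_equal. rewrite IHS. f_equal. f_equal. lia. Qed.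

Lemma lift_plugW : forall W k c x, lift k c (plugW W x) = plugW (liftW k c W) (lift k (c + wdepth W) x).
Proof. induction W; intros; simpl; try rewrite IHW; try (rewrite Nat.add_0_r; auto); f_equal; auto.
  f_equal. f_equal. lia. Qed.

Lemma lift_eq_plugW : forall W tm k c x, lift k c tm = plugW W x ->
  exists W0 x0, tm = plugW W0 x0 /\ W = liftW k c W0 /\ x = lift k (c + wdepth W0) x0.
Proof. induction W; intros tm k c x H; simpl in H.
  - subst x. exists WHole, tm. simpl. rewrite Nat.add_0_r. auto.
  - destruct tm as [n|p|p q|p q]; simpl in H; try discriminate; [destruct (c <=? n); discriminate|].
    injection H as H1 H2. destruct (IHW _ _ _ _ H1) as (W0 & x0 & -> & -> & ->).
    exists (WAppL W0 q), x0. subst; simpl; auto.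
  - destruct tm as [n|p|p q|p q]; simpl in H; try discriminate; [destruct (c <=? n); discriminate|].
    injection H as H1 H2. destruct (IHW _ _ _ _ H2) as (W0 & x0 & -> & -> & ->).
    exists (WAppR p W0), x0. subst; simpl; auto.
  - destruct tm as [n|p|p q|p q]; simpl in H; try discriminate; [destruct (c <=? n); discriminate|].
    injection H as H1 H2. destruct (IHW _ _ _ _ H2) as (W0 & x0 & -> & -> & ->).
    exists (WESR p W0), x0. subst; simpl; auto.
  - destruct tm as [n|p|p q|p q]; simpl in H; try discriminate; [destruct (c <=? n); discriminate|].
    injection H as H1 H2. destruct (IHW _ _ _ _ H1) as (W0 & x0 & -> & -> & ->).
    exists (WESL W0 q), x0. subst; simpl. repeat split; auto. f_equal. lia.
Qed.

Lemma lift_eq_plugS : forall S t k c x, lift k c t = plugS S x ->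
  exists S0 x0, t = plugS S0 x0 /\ S = liftS k c S0 /\ x = lift k (c + length S0) x0.
Proof. induction S; intros t k c x H; simpl in H.
  - subst x. exists [], t. simpl. rewrite Nat.add_0_r. auto.
  - destruct t as [n|p|p q|p q]; simpl in H; try discriminate; [destruct (c <=? n); discriminate|].
    injection H as H1 H2. destruct (IHS _ _ _ _ H1) as (S0 & x0 & -> & -> & ->).
    exists (q :: S0), x0. subst; simpl. repeat split; auto. f_equal. lia.
Qed.

Lemma lift_eq_lam : forall t k c w, lift k c t = Lam w -> exists w0, t = Lam w0 /\ w = lift k (S c) w0.
Proof. destruct t; intros k c w H; simpl in H; try discriminate.
  destruct (c <=? n); discriminate. injection H as <-. eauto. Qed.

Lemma lift_eq_var : forall t k c n, lift k c t = Var n -> exists m, t = Var m /\ ((c <= m /\ n = m + k) \/ (m < c /\ n = m)).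
Proof. destruct t; intros k c m H; simpl in H; try discriminate.
  exists n. split; auto. destruct (Nat.leb_spec c n); injection H; lia. Qed.

Lemma plugS_eq : forall S2 Sv X Y, plugS S2 X = plugS Sv Y ->
  (exists S3, S2 = Sv ++ S3 /\ Y = plugS S3 X) \/ (exists S3, Sv = S2 ++ S3 /\ X = plugS S3 Y).
Proof. induction S2; intros Sv X Y H; simpl in H.
  - right. exists Sv. auto.
  - destruct Sv as [|s Sv]; simpl in H.
    + left. exists (a :: S2). simpl. auto.
    + injection H as H1 <-. destruct (IHS2 _ _ _ H1) as [(S3 & -> & ->)|(S3 & -> & ->)].
      left; exists S3; auto. right; exists S3; auto.
Qed.

Lemma PS : forall S X W c, plugS S X = plugW W c ->
  (exists V, W = wcomp (wS S) V /\ X = plugW V c) \/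
  (exists S1 S2, S = S1 ++ S2 /\ S2 <> [] /\ W = wS S1 /\ c = plugS S2 X) \/
  (exists S1 e S2 V, S = S1 ++ e :: S2 /\ W = wcomp (wS S1) (WESR (plugS S2 X) V) /\ e = plugW V c).
Proof. induction S; intros X W c H; simpl in H.
  - left. exists W. auto.
  - destruct W; simpl in H; try discriminate.
    + right; left. exists [], (a :: S). simpl. repeat split; auto. discriminate.
    + injection H as H1 H2. right; right. exists [], a, S, W. simpl. subst. auto.
    + injection H as H1 <-. destruct (IHS _ _ _ H1) as [(V & -> & ->)|[(S1 & S2 & -> & Hne & -> & ->)|(S1 & e & S2 & V & -> & -> & He)]].
      * left. exists V. auto.
      * right; left. exists (a :: S1), S2. simpl. auto.
      * right; right. exists (a :: S1), e, S2, V. simpl. auto.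
Qed.

Definition disj W1 a W2 b := exists F : term -> term -> term,
  (forall x, plugW W1 x = F x b) /\ (forall y, plugW W2 y = F a y) /\
  (forall y, exists W, wdepth W = wdepth W1 /\ forall x, F x y = plugW W x) /\
  (forall x, exists W, wdepth W = wdepth W2 /\ forall y, F x y = plugW W y).

Lemma disj_ctx : forall U W1 a W2 b, disj W1 a W2 b -> disj (wcomp U W1) a (wcomp U W2) b.
Proof. intros U W1 a W2 b (F & H1 & H2 & H3 & H4).
  exists (fun x y => plugW U (F x y)). repeat split.
  - intros x. rewrite plugW_wcomp, H1. auto.
  - intros y. rewrite plugW_wcomp, H2. auto.
  - intros y. destruct (H3 y) as (W & Hd & HW). exists (wcomp U W).
    rewrite !wdepth_wcomp, Hd. split; auto. intros x; rewrite plugW_wcomp, HW; auto.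
  - intros x. destruct (H4 x) as (W & Hd & HW). exists (wcomp U W).
    rewrite !wdepth_wcomp, Hd. split; auto. intros y; rewrite plugW_wcomp, HW; auto.
Qed.

Lemma decomp : forall W1 a W2 b, plugW W1 a = plugW W2 b ->
  (exists V, W2 = wcomp W1 V /\ a = plugW V b) \/
  (exists V, V <> WHole /\ W1 = wcomp W2 V /\ b = plugW V a) \/ disj W1 a W2 b.
Proof.
  induction W1; intros a W2 b H; simpl in H.
  - left. exists W2. auto.
  - destruct W2; simpl in H; try discriminate.
    + right; left. exists (WAppL W1 t). split; [discriminate|]. simpl; auto.
    + injection H as H1 <-. destruct (IHW1 _ _ _ H1) as [(V & -> & ->)|[(V & Hn & -> & ->)|Hd]].
      * left; exists V; auto.
      * right; left; exists V; auto.
      * right; right. apply (disj_ctx (WAppL WHole t)) in Hd. exact Hd.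
    + injection H as H1 H2. right; right.
      exists (fun x y => App (plugW W1 x) (plugW W2 y)). simpl. repeat split.
      * intros; subst; auto.
      * intros; subst; auto.
      * intros y. exists (WAppL W1 (plugW W2 y)). simpl; auto.
      * intros x. exists (WAppR (plugW W1 x) W2). simpl; auto.
  - destruct W2; simpl in H; try discriminate.
    + right; left. exists (WAppR t W1). split; [discriminate|]. simpl; auto.
    + injection H as H1 H2. right; right.
      exists (fun x y => App (plugW W2 y) (plugW W1 x)). simpl. repeat split.
      * intros; subst; auto.
      * intros; subst; auto.
      * intros y. exists (WAppR (plugW W2 y) W1). simpl; auto.
      * intros x. exists (WAppL W2 (plugW W1 x)). simpl; auto.
    + injection H as <- H1. destruct (IHW1 _ _ _ H1) as [(V & -> & ->)|[(V & Hn & -> & ->)|Hd]].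
      * left; exists V; auto.
      * right; left; exists V; auto.
      * right; right. apply (disj_ctx (WAppR t WHole)) in Hd. exact Hd.
  - destruct W2; simpl in H; try discriminate.
    + right; left. exists (WESR t W1). split; [discriminate|]. simpl; auto.
    + injection H as <- H1. destruct (IHW1 _ _ _ H1) as [(V & -> & ->)|[(V & Hn & -> & ->)|Hd]].
      * left; exists V; auto.
      * right; left; exists V; auto.
      * right; right. apply (disj_ctx (WESR t WHole)) in Hd. exact Hd.
    + injection H as H1 H2. right; right.
      exists (fun x y => ES (plugW W2 y) (plugW W1 x)). simpl. repeat split.
      * intros; subst; auto.
      * intros; subst; auto.
      * intros y. exists (WESR (plugW W2 y) W1). simpl; auto.
      * intros x. exists (WESL W2 (plugW W1 x)). simpl; auto.
  - destruct W2; simpl in H; try discriminate.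
    + right; left. exists (WESL W1 t). split; [discriminate|]. simpl; auto.
    + injection H as H1 H2. right; right.
      exists (fun x y => ES (plugW W1 x) (plugW W2 y)). simpl. repeat split.
      * intros; subst; auto.
      * intros; subst; auto.
      * intros y. exists (WESL W1 (plugW W2 y)). simpl; auto.
      * intros x. exists (WESR (plugW W1 x) W2). simpl; auto.
    + injection H as H1 <-. destruct (IHW1 _ _ _ H1) as [(V & -> & ->)|[(V & Hn & -> & ->)|Hd]].
      * left; exists V; auto.
      * right; left; exists V; auto.
      * right; right. apply (disj_ctx (WESL WHole t)) in Hd. exact Hd.
Qed.

Definition nroot c c' := root_m c c' \/ root_e c c'.

Lemma wclos_ctx : forall R W x y, wclos R x y -> wclos R (plugW W x) (plugW W y).
Proof. intros R W x y H. destruct H as [W0 t u Hr]. rewrite <- !plugW_wcomp. constructor; auto. Qed.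

Lemma wclos_root : forall (R : term -> term -> Prop) x y, R x y -> wclos R x y.
Proof. intros. apply (WClos R WHole). auto. Qed.

Lemma wneg_inv : forall t u, wneg t u -> exists W c c', nroot c c' /\ t = plugW W c /\ u = plugW W c'.
Proof. intros t u [H|H]; destruct H as [W x y Hr]; exists W, x, y; unfold nroot; auto. Qed.

Lemma wneg_intro : forall W c c', nroot c c' -> wneg (plugW W c) (plugW W c').
Proof. intros W c c' [H|H]; [left|right]; constructor; auto. Qed.

Lemma wneg_ctx : forall W x y, wneg x y -> wneg (plugW W x) (plugW W y).
Proof. intros W x y [H|H]; [left|right]; apply wclos_ctx; auto. Qed.

Lemma wgcv_ctx : forall W x y, wgcv x y -> wgcv (plugW W x) (plugW W y).
Proof. intros. apply wclos_ctx; auto. Qed.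

Lemma nsteps_ctx : forall n W x y, nsteps wgcv n x y -> nsteps wgcv n (plugW W x) (plugW W y).
Proof. intros n W x y H. induction H. constructor. econstructor. apply wgcv_ctx; eauto. auto. Qed.

Lemma nsteps_trans : forall R n m x y z, nsteps R n x y -> nsteps R m y z -> nsteps R (n + m) x z.
Proof. intros R n m x y z H. induction H; intros; simpl; auto. econstructor; eauto. Qed.

Lemma nsteps_one : forall (R : term -> term -> Prop) x y, R x y -> nsteps R 1 x y.
Proof. intros. econstructor; eauto. constructor. Qed.

Lemma lift_var_lt : forall k c n, n < c -> lift k c (Var n) = Var n.
Proof. intros; simpl; destruct (Nat.leb_spec c n); [lia|auto]. Qed.
Lemma lift_var_ge : forall k c n, c <= n -> lift k c (Var n) = Var (n + k).
Proof. intros; simpl; destruct (Nat.leb_spec c n); [auto|lia]. Qed.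

Lemma lift_m_res : forall L t u k c,
  lift k c (plugS L (ES t (lift (length L) 0 u))) =
  plugS (liftS k c L) (ES (lift k (S (c + length L)) t) (lift (length (liftS k c L)) 0 (lift k c u))).
Proof. intros. rewrite lift_plugS. simpl. f_equal. f_equal. rewrite length_liftS.
  rewrite (lift_lift_comm u k (length L) 0 c) by lia. try (f_equal; lia). Qed.

Lemma root_m_lift : forall x y k c, root_m x y -> root_m (lift k c x) (lift k c y).
Proof. intros x y k c H. destruct H as [L t u]. rewrite lift_m_res. simpl. rewrite lift_plugS. simpl.
  constructor. Qed.

Lemma lift_e_res : forall W u k c,
  lift k c (ES (plugW W (lift (S (wdepth W)) 0 u)) u) =
  ES (plugW (liftW k (S c) W) (lift (S (wdepth (liftW k (S c) W))) 0 (lift k c u))) (lift k c u).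
Proof. intros. simpl. rewrite lift_plugW. f_equal. f_equal. rewrite wdepth_liftW.
  rewrite (lift_lift_comm u k (S (wdepth W)) 0 c) by lia. try (f_equal; lia). Qed.

Lemma root_e_lift : forall x y k c, root_e x y -> root_e (lift k c x) (lift k c y).
Proof. intros x y k c H. destruct H as [W u]. rewrite lift_e_res. simpl. rewrite lift_plugW.
  replace (lift k (S c + wdepth W) (Var (wdepth W))) with (Var (wdepth (liftW k (S c) W))).
  constructor. all: rewrite wdepth_liftW, lift_var_lt by lia; auto. Qed.

Lemma lift_gcv_res : forall L t0 k c,
  lift k c (plugS L (lift (length L) 0 t0)) = plugS (liftS k c L) (lift (length (liftS k c L)) 0 (lift k c t0)).
Proof. intros. rewrite lift_plugS, length_liftS. f_equal.
  rewrite (lift_lift_comm t0 k (length L) 0 c) by lia. try (f_equal; lia). Qed.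

Lemma root_gcv_lift : forall x y k c, root_gcv x y -> root_gcv (lift k c x) (lift k c y).
Proof. intros x y k c H. destruct H as [L t0 v]. rewrite lift_gcv_res. simpl. rewrite lift_plugS. simpl.
  replace (lift k (S c) (lift 1 0 t0)) with (lift 1 0 (lift k c t0)). constructor.
  rewrite (lift_lift_comm t0 k 1 0 c) by lia. try (f_equal; lia). Qed.

Lemma wclos_lift : forall (R : term -> term -> Prop), (forall x y k c, R x y -> R (lift k c x) (lift k c y)) ->
  forall x y k c, wclos R x y -> wclos R (lift k c x) (lift k c y).
Proof. intros R HR x y k c H. destruct H as [W t u Hr]. rewrite !lift_plugW. constructor. auto. Qed.

Lemma wneg_lift : forall x y k c, wneg x y -> wneg (lift k c x) (lift k c y).
Proof. intros x y k c [H|H]; [left|right]; apply wclos_lift; auto using root_m_lift, root_e_lift. Qed.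

Lemma wgcv_lift : forall x y k c, wgcv x y -> wgcv (lift k c x) (lift k c y).
Proof. intros. apply wclos_lift; auto using root_gcv_lift. Qed.

Lemma nroot_unlift : forall x0 x' k c, nroot (lift k c x0) x' -> exists x0', nroot x0 x0' /\ x' = lift k c x0'.
Proof. intros x0 x' k c [H|H].
  - inversion H as [L w u Ha Hb]. destruct x0 as [n|p|p q|p q]; simpl in Ha; try discriminate;
      [destruct (c <=? n); discriminate|]. injection Ha as Ha Hu; subst u;
    match type of Ha with lift _ _ _ = _ => idtac | _ => symmetry in Ha end.
    destruct (lift_eq_plugS _ _ _ _ _ Ha) as (S0 & y0 & -> & -> & Hy).
    symmetry in Hy. destruct (lift_eq_lam _ _ _ _ Hy) as (w0 & -> & ->).
    exists (plugS S0 (ES w0 (lift (length S0) 0 q))). split. left; constructor.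
    rewrite lift_m_res. rewrite Nat.add_comm. auto.
  - inversion H as [W u Ha Hb]. destruct x0 as [n|p|p q|p q]; simpl in Ha; try discriminate;
      [destruct (c <=? n); discriminate|]. injection Ha as Ha Hu; subst u;
    match type of Ha with lift _ _ _ = _ => idtac | _ => symmetry in Ha end.
    destruct (lift_eq_plugW _ _ _ _ _ Ha) as (W0 & y0 & -> & -> & Hy).
    symmetry in Hy. destruct (lift_eq_var _ _ _ _ Hy) as (m & -> & Hm). rewrite wdepth_liftW in Hm.
    assert (m = wdepth W0) by lia. subst m.
    exists (ES (plugW W0 (lift (S (wdepth W0)) 0 q)) q). split. right; constructor.
    rewrite lift_e_res. rewrite wdepth_liftW. auto.
Qed.

Lemma wneg_unlift : forall t0 y k c, wneg (lift k c t0) y -> exists t0', y = lift k c t0' /\ wneg t0 t0'.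
Proof. intros t0 y k c H. destruct (wneg_inv _ _ H) as (W & x & x' & Hr & He & ->).
  destruct (lift_eq_plugW _ _ _ _ _ He) as (W0 & x0 & -> & -> & ->).
  destruct (nroot_unlift _ _ _ _ Hr) as (x0' & Hr' & ->).
  exists (plugW W0 x0'). split. rewrite lift_plugW. auto. apply wneg_intro; auto. Qed.

Lemma wneg_eq : forall A B A' B', wneg A' B' -> A = A' -> B = B' -> wneg A B.
Proof. intros; subst; auto. Qed.
Lemma wgcv_eq : forall A B A' B', wgcv A' B' -> A = A' -> B = B' -> wgcv A B.
Proof. intros; subst; auto. Qed.
Lemma gcv_at : forall L t0 v, wgcv (ES (lift 1 0 t0) (plugS L (Lam v))) (plugS L (lift (length L) 0 t0)).
Proof. intros. apply wclos_root. constructor. Qed.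

Ltac orient H := match type of H with lift _ _ _ = _ => idtac | _ => symmetry in H end.
Ltac lens := repeat (first [rewrite length_app | rewrite length_liftS | progress simpl]).
Ltac feq := repeat (match goal with |- @eq nat _ _ => lia | |- _ => progress f_equal end).
Ltac norm := repeat (first [rewrite plugW_wcomp | rewrite plugW_wS | rewrite plugS_app | progress simpl]).

Lemma R1 : forall L t0 v y, wneg (plugS L (lift (length L) 0 t0)) y ->
  exists x, wneg (ES (lift 1 0 t0) (plugS L (Lam v))) x /\ wgcv x y.
Proof.
  intros L t0 v y H. destruct (wneg_inv _ _ H) as (W & c & c' & Hr & He & ->).
  destruct (PS _ _ _ _ He) as [(V & -> & HX)|[(S1 & S2 & HL & Hne & -> & Hc)|(S1 & e & S2 & V & HL & -> & He2)]].
  - assert (Hn: wneg (lift (length L) 0 t0) (plugW V c')) by (rewrite HX; apply wneg_intro; auto).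
    destruct (wneg_unlift _ _ _ _ Hn) as (t0' & Ht0' & Hn').
    exists (ES (lift 1 0 t0') (plugS L (Lam v))). split.
    + apply (wneg_ctx (WESL WHole (plugS L (Lam v)))). apply wneg_lift; auto.
    + rewrite plugW_wcomp, plugW_wS, Ht0'. apply gcv_at.
  - destruct S2 as [|s S2']; [congruence|]. subst c. destruct Hr as [Hm|Hee].
    + simpl in Hm. inversion Hm.
    + simpl in Hee. inversion Hee as [W'' u Ha Hb]. subst u.
      match type of Ha with plugS _ _ = _ => idtac | _ => symmetry in Ha end.
      remember (wdepth W'') as d eqn:Hd.
      destruct (PS _ _ _ _ Ha) as [(V & -> & HX)|[(S3 & S4 & HL3 & Hne3 & -> & Hc3)|(P & e & Q & V & HL3 & -> & He3)]].
      * orient HX. destruct (lift_eq_plugW _ _ _ _ _ HX) as (V0 & x0 & -> & -> & Hx0).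
        symmetry in Hx0. destruct (lift_eq_var _ _ _ _ Hx0) as (m & -> & Hm).
        rewrite wdepth_wcomp, wdepth_wS, wdepth_liftW in Hd. subst L. rewrite length_app in Hm. simpl in Hm. lia.
      * destruct S4; [congruence|]. discriminate.
      * subst e S2'.
        set (Wv := wcomp (wS P) (WESR (plugS Q (Lam v)) V)).
        assert (Hdv : wdepth Wv = d) by (subst d; unfold Wv; rewrite !wdepth_wcomp; simpl; auto).
        assert (Hroot : nroot (ES (plugW Wv (Var (wdepth Wv))) s) (ES (plugW Wv (lift (S (wdepth Wv)) 0 s)) s)) by (right; constructor).
        rewrite Hdv in Hroot.
        pose proof (wneg_intro (WESR (lift 1 0 t0) (wS S1)) _ _ Hroot) as Hn.
        exists (ES (lift 1 0 t0) (plugS (S1 ++ s :: P ++ plugW V (lift (S d) 0 s) :: Q) (Lam v))). split.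
        -- apply (wneg_eq _ _ _ _ Hn). subst L; unfold Wv; norm; auto. unfold Wv; norm; auto.
        -- eapply wgcv_eq. apply gcv_at. auto. subst L. norm. f_equal. f_equal. f_equal. f_equal. f_equal.
           rewrite !length_app. simpl. rewrite !length_app. simpl. auto.
  - subst e L.
    exists (ES (lift 1 0 t0) (plugS (S1 ++ plugW V c' :: S2) (Lam v))). split.
    + apply (wneg_eq _ _ _ _ (wneg_intro (WESR (lift 1 0 t0) (wcomp (wS S1) (WESR (plugS S2 (Lam v)) V))) _ _ Hr));
      norm; auto.
    + eapply wgcv_eq. apply gcv_at. auto. norm. rewrite !length_app. simpl. auto.
Qed.

Lemma M : forall S1 S2 Sv t0 v w u, plugS S2 (Lam w) = plugS Sv (lift (length Sv) 0 t0) ->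
  exists x, wneg (App (plugS S1 (ES (lift 1 0 t0) (plugS Sv (Lam v)))) u) x /\
            wgcv x (plugS (S1 ++ S2) (ES w (lift (length (S1 ++ S2)) 0 u))).
Proof.
  intros S1 S2 Sv t0 v w u H.
  assert (exists S3, S2 = Sv ++ S3 /\ lift (length Sv) 0 t0 = plugS S3 (Lam w)) as (S3 & -> & H3).
  { destruct (plugS_eq _ _ _ _ H) as [(S3 & -> & HY)|(S3 & -> & HX)].
    - exists S3; auto.
    - destruct S3; simpl in HX; [|discriminate]. exists []. rewrite !app_nil_r in *. split; [auto|simpl; symmetry; exact HX]. }
  destruct (lift_eq_plugS _ _ _ _ _ H3) as (S3' & y0 & -> & -> & Hy). orient Hy.
  destruct (lift_eq_lam _ _ _ _ Hy) as (w0 & -> & ->).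
  set (Lm := S1 ++ plugS Sv (Lam v) :: liftS 1 0 S3').
  pose proof (wneg_intro WHole _ _ (or_introl (RootM Lm (lift 1 (S (length S3')) w0) u))) as Hn.
  eexists. split.
  - apply (wneg_eq _ _ _ _ Hn); auto. unfold Lm. norm. rewrite lift_plugS. simpl. auto.
  - eapply wgcv_eq. apply (wgcv_ctx (wS S1)). apply (gcv_at Sv (plugS S3' (ES w0 (lift (length S1 + length S3') 0 u))) v).
    + unfold Lm. norm. rewrite lift_plugS. simpl. rewrite (lift_lift_add u) by lia. lens. feq.
    + norm. rewrite lift_plugS. simpl. rewrite (lift_lift_add u) by lia. lens. feq.
Qed.

Lemma R2 : forall a a' c c' V, root_gcv a a' -> nroot c c' -> c = plugW V a' -> V <> WHole ->
  exists x m, wneg (plugW V a) x /\ 1 <= m /\ nsteps wgcv m x c'.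
Proof.
  intros a a' c c' V Hg Hn Hc HV. pose proof Hg as Hg0. destruct Hg as [Sv t0 v].
  destruct Hn as [Hm|He].
  - destruct Hm as [L w u]. destruct V as [|V' u0|s V'|s V'|V' u0]; simpl in Hc; try discriminate; [congruence| | ].
    + injection Hc as Hc Hu; subst u0.
      destruct (PS _ _ _ _ Hc) as [(V'' & -> & HX)|[(S1 & S2 & HL & Hne & -> & Hc2)|(S1 & e & S2 & V'' & HL & -> & He2)]].
      * destruct V''; simpl in HX; try discriminate.
        destruct (M L [] Sv t0 v w u HX) as (x & Hx1 & Hx2).
        exists x, 1. split; [|split; [lia|apply nsteps_one]].
        -- norm. auto.
        -- rewrite app_nil_r in Hx2. auto.
      * destruct (M S1 S2 Sv t0 v w u (eq_sym Hc2)) as (x & Hx1 & Hx2).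
        exists x, 1. split; [|split; [lia|apply nsteps_one]].
        -- norm. auto.
        -- subst L. auto.
      * subst e L.
        exists (plugS (S1 ++ plugW V'' (ES (lift 1 0 t0) (plugS Sv (Lam v))) :: S2) (ES w (lift (length (S1 ++ plugW V'' (plugS Sv (lift (length Sv) 0 t0)) :: S2)) 0 u))), 1.
        split; [|split; [lia|apply nsteps_one]].
        -- pose proof (wneg_intro WHole _ _ (or_introl (RootM (S1 ++ plugW V'' (ES (lift 1 0 t0) (plugS Sv (Lam v))) :: S2) w u))) as Hn.
           apply (wneg_eq _ _ _ _ Hn). norm. auto. norm. lens. auto.
        -- eapply wgcv_eq. apply (wgcv_ctx (wcomp (wS S1) (WESR (plugS S2 (ES w (lift (length (S1 ++ plugW V'' (plugS Sv (lift (length Sv) 0 t0)) :: S2)) 0 u))) V''))).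
           apply gcv_at. norm. auto. norm. auto.
    + injection Hc as Hs Hu; subst s u.
      exists (plugS L (ES w (lift (length L) 0 (plugW V' (ES (lift 1 0 t0) (plugS Sv (Lam v))))))), 1.
      split; [|split; [lia|apply nsteps_one]].
      * simpl. apply (wneg_eq _ _ _ _ (wneg_intro WHole _ _ (or_introl (RootM L w (plugW V' (ES (lift 1 0 t0) (plugS Sv (Lam v)))))))); auto.
      * assert (HA : wgcv (plugW V' (ES (lift 1 0 t0) (plugS Sv (Lam v)))) (plugW V' (plugS Sv (lift (length Sv) 0 t0))))
          by (apply wgcv_ctx; apply wclos_root; exact Hg0).
        apply (wgcv_eq _ _ _ _ (wgcv_ctx (wcomp (wS L) (WESR w WHole)) _ _ (wgcv_lift _ _ (length L) 0 HA))); norm; auto.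
  - destruct He as [W u]. destruct V as [|V' u0|s V'|s V'|V' u0]; simpl in Hc; try discriminate; [congruence| | ].
    + injection Hc as Hs Hu; subst s u.
      set (A := plugW V' (ES (lift 1 0 t0) (plugS Sv (Lam v)))).
      set (A' := plugW V' (plugS Sv (lift (length Sv) 0 t0))).
      assert (HA : wgcv A A') by (apply wgcv_ctx; apply wclos_root; exact Hg0).
      exists (ES (plugW W (lift (S (wdepth W)) 0 A)) A), 2. split; [|split; [lia|]].
      * simpl. apply (wneg_intro WHole _ _ (or_intror (RootE W A))).
      * econstructor. apply (wgcv_ctx (WESL W A)). apply wgcv_lift. exact HA.
        apply nsteps_one. apply (wgcv_ctx (WESR (plugW W (lift (S (wdepth W)) 0 A')) WHole)). exact HA.
    + injection Hc as Hc Hu; subst u0.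
      remember (wdepth W) as d eqn:Hd.
      destruct (decomp _ _ _ _ (eq_sym Hc)) as [(V'' & -> & Ha)|[(U & HU & -> & Hb)|Hdisj]].
      * destruct (PS _ _ _ _ Ha) as [(U & -> & HX)|[(S1 & S2 & HL & Hne & -> & Hc2)|(S1 & e & S2 & U & HL & -> & He2)]].
        -- orient HX. destruct (lift_eq_plugW _ _ _ _ _ HX) as (U0 & y0 & -> & -> & Hy).
           orient Hy. destruct (lift_eq_var _ _ _ _ Hy) as (j & -> & Hj).
           rewrite !wdepth_wcomp, wdepth_wS, wdepth_liftW in Hd.
           assert (Hj' : j = wdepth V' + wdepth U0 /\ wdepth U0 <= j) by lia. destruct Hj' as [Hj1 Hj2].
           set (We := wcomp V' (WESL (liftW 1 0 U0) (plugS Sv (Lam v)))).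
           assert (HdWe : wdepth We = S j) by (unfold We; rewrite wdepth_wcomp; simpl; rewrite wdepth_liftW; lia).
           exists (ES (plugW We (lift (S (S j)) 0 u)) u), 1. split; [|split; [lia|apply nsteps_one]].
           ++ pose proof (wneg_intro WHole _ _ (or_intror (RootE We u))) as Hn. rewrite HdWe in Hn.
              apply (wneg_eq _ _ _ _ Hn); [|auto]. unfold We. norm. rewrite lift_plugW, lift_var_ge by lia. feq.
           ++ apply (wgcv_eq _ _ _ _ (wgcv_ctx (WESL V' u) _ _ (gcv_at Sv (plugW U0 (lift (S j) 0 u)) v))).
              ** unfold We. norm. rewrite lift_plugW, lift_lift_add by lia. feq.
              ** norm. rewrite lift_plugW, lift_lift_add by lia. feq.
        -- destruct S2; [congruence|]. simpl in Hc2; discriminate.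
        -- subst e Sv.
           set (Wv := wcomp V' (WESR (lift 1 0 t0) (wcomp (wS S1) (WESR (plugS S2 (Lam v)) U)))).
           assert (HdWv : wdepth Wv = d) by (rewrite Hd; unfold Wv; rewrite !wdepth_wcomp; simpl; rewrite !wdepth_wcomp, !wdepth_wS; auto).
           exists (ES (plugW Wv (lift (S d) 0 u)) u), 1. split; [|split; [lia|apply nsteps_one]].
           ++ pose proof (wneg_intro WHole _ _ (or_intror (RootE Wv u))) as Hn. rewrite HdWv in Hn.
              apply (wneg_eq _ _ _ _ Hn); [|auto]. unfold Wv. norm. auto.
           ++ apply (wgcv_eq _ _ _ _ (wgcv_ctx (WESL V' u) _ _ (gcv_at (S1 ++ plugW U (lift (S d) 0 u) :: S2) t0 v))).
              ** unfold Wv. norm. auto.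
              ** norm. lens. auto.
      * destruct U; simpl in Hb; try discriminate; congruence.
      * destruct Hdisj as (F & H1 & H2 & H3 & H4).
        destruct (H4 (ES (lift 1 0 t0) (plugS Sv (Lam v)))) as (Wa & HWa & HFa).
        exists (ES (F (ES (lift 1 0 t0) (plugS Sv (Lam v))) (lift (S d) 0 u)) u), 1.
        split; [|split; [lia|apply nsteps_one]].
        -- pose proof (wneg_intro WHole _ _ (or_intror (RootE Wa u))) as Hn. rewrite HWa, <- Hd in Hn.
           apply (wneg_eq _ _ _ _ Hn); simpl; rewrite ?H1, ?HFa; auto.
        -- destruct (H3 (lift (S d) 0 u)) as (Wy & _ & HFy).
           apply (wgcv_eq _ _ _ _ (wgcv_ctx (WESL Wy u) _ _ (wclos_root _ _ _ Hg0))); simpl; rewrite ?HFy; auto.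
           rewrite <- HFy, <- H2. auto.
Qed.

Lemma swap1 : forall t t1 t2, wgcv t t1 -> wneg t1 t2 -> exists x m, wneg t x /\ 1 <= m /\ nsteps wgcv m x t2.
Proof.
  intros t t1 t2 Hg H2. destruct Hg as [W1 a a' Hg].
  destruct (wneg_inv _ _ H2) as (W2 & c & c' & Hn & E & ->).
  destruct (decomp _ _ _ _ E) as [(V & -> & Ha)|[(V & HV & -> & Hb)|Hdisj]].
  - pose proof Hg as Hg0. destruct Hg as [Sv t0 v].
    assert (Hw : wneg (plugS Sv (lift (length Sv) 0 t0)) (plugW V c')) by (rewrite Ha; apply wneg_intro; auto).
    destruct (R1 _ _ v _ Hw) as (x & Hx1 & Hx2).
    exists (plugW W1 x), 1. split; [apply wneg_ctx; auto|split; [lia|]].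
    apply nsteps_one. rewrite plugW_wcomp. apply wgcv_ctx. auto.
  - destruct (R2 _ _ _ _ _ Hg Hn Hb HV) as (x & m & Hx1 & Hm & Hx2).
    exists (plugW W2 x), m. rewrite plugW_wcomp. split; [apply wneg_ctx; auto|split; auto].
    apply nsteps_ctx; auto.
  - destruct Hdisj as (F & H1 & H3 & H4 & H5).
    destruct (H5 a) as (Wa & _ & HFa). destruct (H4 c') as (Wc & _ & HFc).
    exists (F a c'), 1. split; [|split; [lia|apply nsteps_one]].
    + rewrite H1, !HFa. apply wneg_intro; auto.
    + rewrite H3, !HFc. apply wgcv_ctx, wclos_root; auto.
Qed.

Lemma lemA : forall n t t1 t2, nsteps wgcv n t t1 -> wneg t1 t2 ->
  exists x m, wneg t x /\ n <= m /\ nsteps wgcv m x t2.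
Proof.
  intros n t t1 t2 H. revert t2. induction H; intros t2 Hn.
  - exists t2, 0. split; auto. split; auto. constructor.
  - destruct (IHnsteps _ Hn) as (xb & mb & Hb1 & Hb2 & Hb3).
    destruct (swap1 _ _ _ H Hb1) as (xc & m1 & Hc1 & Hc2 & Hc3).
    exists xc, (m1 + mb). split; auto. split; [lia|]. eapply nsteps_trans; eauto.
Qed.

Lemma lemC : forall k t1 s, nsteps wneg k t1 s -> forall n t, nsteps wgcv n t t1 ->
  exists s' m, nsteps wneg k t s' /\ n <= m /\ nsteps wgcv m s' s.
Proof.
  intros k t1 s H. induction H; intros m0 t0 Hg.
  - exists t0, m0. split; [constructor|]. auto.
  - destruct (lemA _ _ _ _ Hg H) as (x & m & Hx1 & Hx2 & Hx3).
    destruct (IHnsteps _ _ Hx3) as (s' & m' & Hs1 & Hs2 & Hs3).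
    exists s', m'. split; [econstructor; eauto|]. split; [lia|auto].
Qed.

Theorem proposition4p4 :
  forall (t u : term) (k h : nat),
    wseq t u k h ->
    exists (h' : nat) (s : term),
      h <= h' /\ nsteps wneg k t s /\ nsteps wgcv h' s u.
Proof.
  intros t u k h H. induction H.
  - exists 0, t. split; auto. split; constructor.
  - destruct IHwseq as (h' & s & Hh & Hs1 & Hs2). exists h', s. split; auto. split; auto. econstructor; eauto.
  - destruct IHwseq as (h' & s & Hh & Hs1 & Hs2).
    destruct (lemC _ _ _ Hs1 1 t (nsteps_one _ _ _ H)) as (s' & m & Hm1 & Hm2 & Hm3).
    exists (m + h'), s'. split; [lia|]. split; auto. eapply nsteps_trans; eauto.
Qed.
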